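(* Let $\tau\ge1$ be an integer and $h(z;\lambda)=z^{\tau+1}-z^{\tau}+\lambda$. Let $I\subseteq(0,\infty)$ be an interval and $z:I\to\mathbb C\setminus\mathbb R$ a continuous function with $h(z(\lambda);\lambda)=0$ for all $\lambda\in I$. Then $\lambda\mapsto|z(\lambda)|$ is strictly increasing on $I$. (That is, all roots of $h(\cdot;\lambda)$ with nonzero imaginary part have modulus increasing with $\lambda$.) *)

(* Defs.v *)
From Stdlib Require Import Reals.
From Coquelicot Require Import Coquelicot.
Open Scope R_scope.

Fixpoint cpow (z : Complex.C) (n : nat) : Complex.C :=
  match n with
  | O => RtoC 1
  | S m => Cmult z (cpow z m)
  end.

Definition h (tau : nat) (z : Complex.C) (lam : R) : Complex.C :=
  Cplus (Cminus (cpow z (S tau)) (cpow z tau)) (RtoC lam).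

Definition is_interval (I : R -> Prop) : Prop :=
  forall a b c, I a -> I b -> a <= c -> c <= b -> I c.

(* Main.v *)
Require Import Defs.
From Stdlib Require Import Reals Lra Lia Psatz.
From Coquelicot Require Import Coquelicot.
Open Scope R_scope.

Fixpoint Dq (n : nat) (w c : Complex.C) : Complex.C :=
  match n with
  | O => RtoC 0
  | S m => Cplus (Cmult w (Dq m w c)) (cpow c m)
  end.

Lemma D_diff n w c : Cminus (cpow w n) (cpow c n) = Cmult (Cminus w c) (Dq n w c).
Proof.
  induction n as [|n IH]; simpl.
  - ring.
  - assert (E : cpow w n = Cplus (cpow c n) (Cmult (Cminus w c) (Dq n w c))).
    { rewrite <- IH. ring. }
    rewrite E. ring.
Qed.

Lemma D_diag n c : Cmult c (Dq n c c) = Cmult (RtoC (INR n)) (cpow c n).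
Proof.
  induction n as [|n IH]; simpl Dq; simpl cpow.
  - simpl. ring.
  - rewrite S_INR, RtoC_plus.
    replace (Cmult c (Cplus (Cmult c (Dq n c c)) (cpow c n)))
      with (Cplus (Cmult c (Cmult c (Dq n c c))) (Cmult c (cpow c n))) by ring.
    rewrite IH. ring.
Qed.

Lemma Cmod_cpow w n : Cmod (cpow w n) = Cmod w ^ n.
Proof.
  induction n as [|n IH]; simpl.
  - apply Cmod_1.
  - rewrite Cmod_mult, IH. reflexivity.
Qed.

Lemma Cmod_ge_im w : Rabs (snd w) <= Cmod w.
Proof.
  assert (H := Cmod2_alt w). assert (H0 := Cmod_ge_0 w).
  assert (Rabs (snd w) ^ 2 <= Cmod w ^ 2).
  { rewrite RPow_abs. rewrite Rabs_right by (apply Rle_ge, pow2_ge_0).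
    rewrite H. change (Re w) with (fst w). change (Im w) with (snd w).
    pose proof (pow2_ge_0 (fst w)). lra. }
  pose proof (Rabs_pos (snd w)). nra.
Qed.

Lemma Im_bound_weak w n :
  Rabs (snd (cpow w (S n))) <= INR (S n) * Cmod w ^ n * Rabs (snd w).
Proof.
  induction n as [|n IH].
  - simpl. replace (fst w * 0 + snd w * 1) with (snd w) by ring. lra.
  - change (cpow w (S (S n))) with (Cmult w (cpow w (S n))).
    set (c := cpow w (S n)) in *.
    change (snd (Cmult w c)) with (fst w * snd c + snd w * fst c).
    set (r := Cmod w).
    assert (Hx : Rabs (fst w) <= r) by apply re_le_Cmod.
    assert (HB : Rabs (fst c) <= r ^ S n).
    { unfold r; rewrite <- Cmod_cpow. apply re_le_Cmod. }
    assert (H1 : Rabs (fst w) * Rabs (snd c) <= r * (INR (S n) * r ^ n * Rabs (snd w))).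
    { apply Rmult_le_compat; auto using Rabs_pos. }
    assert (H2 : Rabs (snd w) * Rabs (fst c) <= Rabs (snd w) * r ^ S n).
    { apply Rmult_le_compat_l; auto using Rabs_pos. }
    eapply Rle_trans; [apply Rabs_triang|]. rewrite !Rabs_mult.
    replace (INR (S (S n)) * r ^ S n * Rabs (snd w)) with
      (r * (INR (S n) * r ^ n * Rabs (snd w)) + Rabs (snd w) * r ^ S n)
      by (rewrite (S_INR (S n)); simpl; ring).
    lra.
Qed.

Lemma Im_bound_strict w n : snd w <> 0 ->
  Rabs (snd (cpow w (S (S n)))) < INR (S (S n)) * Cmod w ^ (S n) * Rabs (snd w).
Proof.
  intros Hy.
  change (cpow w (S (S n))) with (Cmult w (cpow w (S n))).
  pose proof (Im_bound_weak w n) as IH.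
  set (c := cpow w (S n)) in *.
  change (snd (Cmult w c)) with (fst w * snd c + snd w * fst c).
  set (r := Cmod w) in *.
  assert (Hy' : 0 < Rabs (snd w)) by (apply Rabs_pos_lt; auto).
  assert (Hr2 : r ^ 2 = fst w ^ 2 + snd w ^ 2) by apply Cmod2_alt.
  assert (Hr0 : 0 <= r) by apply Cmod_ge_0.
  assert (Hx : Rabs (fst w) < r).
  { assert (Rabs (fst w) ^ 2 < r ^ 2).
    { rewrite RPow_abs. rewrite Rabs_right by (apply Rle_ge, pow2_ge_0).
      rewrite Hr2. assert (0 < snd w ^ 2) by (apply pow2_gt_0; auto). lra. }
    nra. }
  assert (HB : Rabs (fst c) <= r ^ S n).
  { unfold r; rewrite <- Cmod_cpow. apply re_le_Cmod. }
  assert (Hrpos : 0 < r) by (pose proof (Rabs_pos (fst w)); lra).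
  assert (Bpos : 0 < INR (S n) * r ^ n * Rabs (snd w)).
  { apply Rmult_lt_0_compat; [apply Rmult_lt_0_compat|]; auto.
    apply lt_0_INR; lia. apply pow_lt; auto. }
  set (B := INR (S n) * r ^ n * Rabs (snd w)) in *.
  assert (H1 : Rabs (fst w) * Rabs (snd c) <= Rabs (fst w) * B).
  { apply Rmult_le_compat_l; auto using Rabs_pos. }
  assert (H1' : Rabs (fst w) * B < r * B) by (apply Rmult_lt_compat_r; auto).
  assert (H2 : Rabs (snd w) * Rabs (fst c) <= Rabs (snd w) * r ^ S n).
  { apply Rmult_le_compat_l; auto using Rabs_pos. }
  eapply Rle_lt_trans; [apply Rabs_triang|]. rewrite !Rabs_mult.
  replace (INR (S (S n)) * r ^ S n * Rabs (snd w)) with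
      (r * B + Rabs (snd w) * r ^ S n)
      by (unfold B; rewrite (S_INR (S n)); simpl; ring).
  lra.
Qed.

Lemma root_comp tau z lam : h tau z lam = RtoC 0 ->
  let p := fst (cpow z tau) in let q := snd (cpow z tau) in
  p * (1 - fst z) + q * snd z = lam /\ q * (1 - fst z) - p * snd z = 0.
Proof.
  intros H p q.
  unfold h in H. simpl cpow in H.
  assert (H1 := f_equal fst H). assert (H2 := f_equal snd H).
  simpl in H1, H2. fold p q in H1, H2. split; lra.
Qed.

Lemma key tau z lam : (1 <= tau)%nat -> 0 < lam -> snd z <> 0 ->
  h tau z lam = RtoC 0 -> fst (cpow z tau) < INR (S tau) * lam.
Proof.
  intros Ht Hl Hy Hr.
  destruct (root_comp tau z lam Hr) as [E1 E2].
  set (p := fst (cpow z tau)) in *. set (q := snd (cpow z tau)) in *.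
  set (x := fst z) in *. set (y := snd z) in *.
  destruct tau as [|m]; [lia|].
  pose proof (Im_bound_strict z m Hy) as HB.
  assert (Eq : snd (cpow z (S (S m))) = q).
  { change (cpow z (S (S m))) with (Cmult z (cpow z (S m))).
    change (snd (Cmult z (cpow z (S m)))) with (fst z * snd (cpow z (S m)) + snd z * fst (cpow z (S m))).
    fold x y p q. lra. }
  rewrite Eq in HB.
  rewrite <- Cmod_cpow in HB.
  set (N := Cmod (cpow z (S m))) in *.
  assert (HN2 : N ^ 2 = p ^ 2 + q ^ 2) by apply Cmod2_alt.
  assert (HN0 : 0 <= N) by apply Cmod_ge_0.
  set (K := INR (S (S m))) in *.
  assert (HK : 1 <= K) by (unfold K; rewrite S_INR; pose proof (pos_INR (S m)); lra).
  set (u := 1 - x) in *.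
  set (W := u ^ 2 + y ^ 2).
  assert (Hy2 : 0 < y ^ 2) by (apply pow2_gt_0; auto).
  assert (HW : 0 < W) by (unfold W; pose proof (pow2_ge_0 u); lra).
  assert (Hp : p * W = lam * u).
  { assert (p * W - lam * u = - y * (q * u - p * y)) by (unfold W; rewrite <- E1; ring).
    rewrite E2 in H. lra. }
  assert (Hq : q * W = lam * y).
  { assert (q * W - lam * y = u * (q * u - p * y)) by (unfold W; rewrite <- E1; ring).
    rewrite E2 in H. lra. }
  assert (HL : lam ^ 2 = N ^ 2 * W).
  { rewrite HN2. unfold W. rewrite <- E1.
    replace ((p ^ 2 + q ^ 2) * (u ^ 2 + y ^ 2)) with ((p * u + q * y) ^ 2 + (q * u - p * y) ^ 2) by ring.
    rewrite E2. ring. }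
  assert (Hay : 0 < Rabs y) by (apply Rabs_pos_lt; auto).
  assert (Hq' : Rabs q * W = lam * Rabs y).
  { rewrite <- (Rabs_right W) by lra; rewrite <- Rabs_mult, Hq, Rabs_mult.
    rewrite (Rabs_right lam) by lra. reflexivity. }
  assert (H3 : lam * Rabs y < K * N * W * Rabs y).
  { rewrite <- Hq'. replace (K * N * W * Rabs y) with ((K * N * Rabs y) * W) by ring.
    apply Rmult_lt_compat_r; auto. }
  assert (H4 : lam < K * N * W).
  { apply (Rmult_lt_reg_r (Rabs y)); auto. }
  assert (H5 : lam ^ 2 < (K * N * W) ^ 2) by nra.
  assert (HNp : 0 < N ^ 2).
  { assert (0 < lam ^ 2) by (apply pow2_gt_0; lra). nra. }
  assert (H6 : 1 < K ^ 2 * W).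
  { rewrite HL in H5.
    assert (N ^ 2 * W * 1 < N ^ 2 * W * (K ^ 2 * W)) by (rewrite Rmult_1_r; nra).
    apply Rmult_lt_reg_l in H; nra. }
  destruct (Rle_or_lt u 0) as [Hu|Hu].
  - assert (p * W <= 0) by (rewrite Hp; nra).
    assert (p <= 0).
    { destruct (Rle_or_lt p 0); auto. assert (0 < p * W) by (apply Rmult_lt_0_compat; lra). lra. }
    assert (0 < K * lam) by (apply Rmult_lt_0_compat; lra). lra.
  - assert (u ^ 2 <= W) by (unfold W; lra).
    assert (u < K * W).
    { assert (0 < K * W) by (apply Rmult_lt_0_compat; lra).
      assert (u ^ 2 < (K * W) ^ 2) by nra. nra. }
    assert (p * W < K * lam * W) by (rewrite Hp; nra).
    apply (Rmult_lt_reg_r W); lra.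
Qed.

Section Lims.
Context {T : Type} {F : (T -> Prop) -> Prop} {FF : Filter F}.

Lemma lim_plus (f g : T -> R) a b :
  filterlim f F (locally a) -> filterlim g F (locally b) ->
  filterlim (fun x => f x + g x) F (locally (a + b)).
Proof.
  intros Hf Hg. eapply filterlim_comp_2; [exact Hf|exact Hg|].
  apply (filterlim_plus (K := R_AbsRing) (V := R_NormedModule) a b).
Qed.

Lemma lim_mult (f g : T -> R) a b :
  filterlim f F (locally a) -> filterlim g F (locally b) ->
  filterlim (fun x => f x * g x) F (locally (a * b)).
Proof.
  intros Hf Hg. eapply filterlim_comp_2; [exact Hf|exact Hg|].
  apply (filterlim_mult (K := R_AbsRing) a b).
Qed.

Lemma lim_const (a : R) : filterlim (fun _ => a) F (locally a).
Proof. apply filterlim_const. Qed.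

Lemma lim_minus (f g : T -> R) a b :
  filterlim f F (locally a) -> filterlim g F (locally b) ->
  filterlim (fun x => f x - g x) F (locally (a - b)).
Proof.
  intros Hf Hg.
  assert (H := lim_plus f (fun x => (-1) * g x) a ((-1) * b) Hf
    (lim_mult _ _ _ _ (lim_const (-1)) Hg)).
  replace (a - b) with (a + -1 * b) by ring.
  eapply filterlim_ext; [|exact H]. intros x; simpl; ring.
Qed.

Lemma lim_D (w : T -> Complex.C) w0 c :
  filterlim (fun x => fst (w x)) F (locally (fst w0)) ->
  filterlim (fun x => snd (w x)) F (locally (snd w0)) ->
  forall n,
  filterlim (fun x => fst (Dq n (w x) c)) F (locally (fst (Dq n w0 c))) /\
  filterlim (fun x => snd (Dq n (w x) c)) F (locally (snd (Dq n w0 c))).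
Proof.
  intros H1 H2 n. induction n as [|n [IH1 IH2]].
  - simpl. split; apply lim_const.
  - change (Dq (S n) ?u c) with (Cplus (Cmult u (Dq n u c)) (cpow c n)).
    split.
    + change (fst (Cplus (Cmult ?u (Dq n ?u c)) (cpow c n))) with
        (fst u * fst (Dq n u c) - snd u * snd (Dq n u c) + fst (cpow c n)).
      apply lim_plus; [apply lim_minus; apply lim_mult; auto|apply lim_const].
    + change (snd (Cplus (Cmult ?u (Dq n ?u c)) (cpow c n))) with
        (fst u * snd (Dq n u c) + snd u * fst (Dq n u c) + snd (cpow c n)).
      apply lim_plus; [apply lim_plus; apply lim_mult; auto|apply lim_const].
Qed.

End Lims.

Lemma lim_fst (z0 : Complex.C) : filterlim (fun w : Complex.C => fst w) (locally z0) (locally (fst z0)).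
Proof.
  apply filterlim_locally. intros eps. exists eps. intros w Hw. exact (proj1 Hw).
Qed.
Lemma lim_snd (z0 : Complex.C) : filterlim (fun w : Complex.C => snd w) (locally z0) (locally (snd z0)).
Proof.
  apply filterlim_locally. intros eps. exists eps. intros w Hw. exact (proj2 Hw).
Qed.

Lemma global (N : R -> R) (I : R -> Prop) : is_interval I ->
  (forall l, I l -> filterlim N (within I (locally l)) (locally (N l))) ->
  (forall l0, I l0 -> exists del, 0 < del /\
     forall l, I l -> l0 < l < l0 + del -> N l0 < N l) ->
  forall l1 l2, I l1 -> I l2 -> l1 < l2 -> N l1 < N l2.
Proof.
  intros hI Hc Hloc l1 l2 H1 H2 Hlt.
  set (cl := fun t => Rmax l1 (Rmin l2 t)).
  assert (Hcl : forall t, l1 <= cl t <= l2).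
  { intros t; unfold cl, Rmax, Rmin; repeat destruct Rle_dec; lra. }
  assert (Hcl_id : forall t, l1 <= t <= l2 -> cl t = t).
  { intros t Ht; unfold cl, Rmax, Rmin; repeat destruct Rle_dec; lra. }
  assert (Hlip : forall t s, Rabs (cl t - cl s) <= Rabs (t - s)).
  { intros t s; unfold cl, Rmax, Rmin; repeat destruct Rle_dec;
    unfold Rabs; repeat destruct Rcase_abs; lra. }
  assert (HIcl : forall t, I (cl t)).
  { intros t. apply (hI l1 l2); auto; apply Hcl. }
  set (g := fun t => N (cl t)).
  assert (Hg : forall c, continuity_pt g c).
  { intros c. apply continuity_pt_filterlim. unfold g.
    apply filterlim_comp with (G := within I (locally (cl c))).
    - intros P [eps HP]. exists eps. intros y Hy. apply HP; [|apply HIcl].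
      change (Rabs (cl y - cl c) < eps). change (Rabs (y - c) < eps) in Hy.
      pose proof (Hlip y c). lra.
    - apply Hc, HIcl. }
  destruct (continuity_ab_maj g l1 l2 (Rlt_le _ _ Hlt) (fun c _ => Hg c))
    as [Mx [HM [Ha Hb]]].
  assert (HIM : I Mx) by (apply (hI l1 l2); auto).
  assert (HMx : Mx = l2).
  { destruct (Rle_lt_dec l2 Mx) as [H|H]; [lra|exfalso].
    destruct (Hloc Mx HIM) as [del [Hdel Hd]].
    set (l := Mx + Rmin del (l2 - Mx) / 2).
    assert (Hm1 : 0 < Rmin del (l2 - Mx)) by (apply Rmin_pos; lra).
    assert (Hm2 : Rmin del (l2 - Mx) <= del) by apply Rmin_l.
    assert (Hm3 : Rmin del (l2 - Mx) <= l2 - Mx) by apply Rmin_r.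
    assert (Hl : l1 <= l <= l2) by (unfold l; lra).
    assert (HIl : I l) by (apply (hI l1 l2); auto; lra).
    pose proof (Hd l HIl ltac:(unfold l; lra)).
    pose proof (HM l Hl). unfold g in H3. rewrite !Hcl_id in H3 by lra. lra. }
  subst Mx.
  destruct (Hloc l1 H1) as [del [Hdel Hd]].
  set (l := l1 + Rmin del (l2 - l1) / 2).
  assert (Hm1 : 0 < Rmin del (l2 - l1)) by (apply Rmin_pos; lra).
  assert (Hm2 : Rmin del (l2 - l1) <= del) by apply Rmin_l.
  assert (Hm3 : Rmin del (l2 - l1) <= l2 - l1) by apply Rmin_r.
  assert (Hl : l1 <= l <= l2) by (unfold l; lra).
  assert (HIl : I l) by (apply (hI l1 l2); auto; lra).
  pose proof (Hd l HIl ltac:(unfold l; lra)).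
  pose proof (HM l Hl). unfold g in H0. rewrite !Hcl_id in H0 by lra. lra.
Qed.

Lemma local_incr (tau : nat) (htau : (1 <= tau)%nat)
  (I : R -> Prop) (hIpos : forall x, I x -> 0 < x)
  (z : R -> Complex.C)
  (hz_nonreal : forall lam, I lam -> Im (z lam) <> 0)
  (hz_cont : continuous_on I z)
  (hz_root : forall lam, I lam -> h tau (z lam) lam = RtoC 0) l0 :
  I l0 -> exists del, 0 < del /\ forall l, I l -> l0 < l < l0 + del ->
    fst (z l0) * fst (z l0) + snd (z l0) * snd (z l0) <
    fst (z l) * fst (z l) + snd (z l) * snd (z l).
Proof.
  intros H0.
  set (z0 := z l0).
  pose proof (hz_cont l0 H0) as Hc. fold z0 in Hc.
  assert (HX := filterlim_comp _ _ _ z (fun w => fst w) _ _ _ Hc (lim_fst z0)).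
  assert (HY := filterlim_comp _ _ _ z (fun w => snd w) _ _ _ Hc (lim_snd z0)).
  destruct (lim_D z z0 z0 HX HY (S tau)) as [P1 P2].
  destruct (lim_D z z0 z0 HX HY tau) as [P3 P4].
  set (Q := fun w => Cminus (Dq (S tau) w z0) (Dq tau w z0)).
  set (E := fun l => fst (Cmult z0 (Q (z l)))).
  assert (HE : filterlim E (within I (locally l0)) (locally (E l0))).
  { unfold E, Q. fold z0.
    change (fun l => fst (Cmult z0 (Cminus (Dq (S tau) (z l) z0) (Dq tau (z l) z0))))
      with (fun l => fst z0 * (fst (Dq (S tau) (z l) z0) - fst (Dq tau (z l) z0))
                   - snd z0 * (snd (Dq (S tau) (z l) z0) - snd (Dq tau (z l) z0))).
    change (fst (Cmult z0 (Cminus (Dq (S tau) z0 z0) (Dq tau z0 z0))))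
      with (fst z0 * (fst (Dq (S tau) z0 z0) - fst (Dq tau z0 z0))
                   - snd z0 * (snd (Dq (S tau) z0 z0) - snd (Dq tau z0 z0))).
    apply lim_minus; apply lim_mult; try apply lim_const; apply lim_minus; auto. }
  set (v := E l0) in HE.
  assert (Hv : v < 0).
  { unfold v, E, Q. fold z0.
    assert (Ev : Cmult z0 (Cminus (Dq (S tau) z0 z0) (Dq tau z0 z0)) =
      Cminus (Cmult (RtoC (INR (S tau))) (cpow z0 (S tau)))
             (Cmult (RtoC (INR tau)) (cpow z0 tau))).
    { rewrite <- !D_diag. ring. }
    rewrite Ev.
    pose proof (key tau z0 l0 htau (hIpos l0 H0) (hz_nonreal l0 H0) (hz_root l0 H0)) as Hk.
    pose proof (hz_root l0 H0) as Hr. fold z0 in Hr. unfold h in Hr.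
    apply (f_equal fst) in Hr.
    change (cpow z0 (S tau)) with (Cmult z0 (cpow z0 tau)) in *.
    set (a := cpow z0 tau) in *.
    change (fst (Cmult z0 a) + - fst a + l0 = 0) in Hr.
    change (INR (S tau) * fst (Cmult z0 a) - 0 * snd (Cmult z0 a)
            + - (INR tau * fst a - 0 * snd a) < 0).
    rewrite S_INR in *.
    replace (fst (Cmult z0 a)) with (fst a - l0) by lra.
    replace ((INR tau + 1) * (fst a - l0) - 0 * snd (Cmult z0 a) + - (INR tau * fst a - 0 * snd a))
      with (fst a - (INR tau + 1) * l0) by ring.
    lra. }
  assert (Heps : 0 < - v) by lra.
  destruct (proj1 (filterlim_locally _ _) HE (mkposreal _ Heps)) as [del Hdel].
  exists del. split; [apply cond_pos|].
  intros l Hl [Hlt1 Hlt2].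
  assert (Hb : ball l0 del l).
  { change (Rabs (l - l0) < del). rewrite Rabs_right; lra. }
  specialize (Hdel l Hb Hl). change (Rabs (E l - v) < - v) in Hdel.
  assert (HEl : E l < 0).
  { destruct (Rcase_abs (E l - v)) as [Hn|Hn];
      [rewrite Rabs_left in Hdel|rewrite Rabs_right in Hdel]; lra. }
  set (zl := z l) in *.
  assert (Id : Cmult (Cminus zl z0) (Q zl) = RtoC (l0 - l)).
  { unfold Q.
    transitivity (Cminus (Cminus (cpow zl (S tau)) (cpow z0 (S tau)))
                         (Cminus (cpow zl tau) (cpow z0 tau))).
    { rewrite !D_diff. ring. }
    pose proof (hz_root l Hl) as R1. pose proof (hz_root l0 H0) as R0.
    fold zl in R1. fold z0 in R0. unfold h in R1, R0.
    assert (F1 := f_equal fst R1). assert (F2 := f_equal snd R1).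
    assert (F3 := f_equal fst R0). assert (F4 := f_equal snd R0).
    remember (cpow zl (S tau)) as A1. remember (cpow zl tau) as A2.
    remember (cpow z0 (S tau)) as A3. remember (cpow z0 tau) as A4.
    simpl in F1, F2, F3, F4.
    apply injective_projections; simpl; lra. }
  unfold E in HEl.
  set (q := Q zl) in *.
  assert (G1 := f_equal fst Id). assert (G2 := f_equal snd Id).
  change (fst (Cminus zl z0) * fst q - snd (Cminus zl z0) * snd q = l0 - l) in G1.
  change (fst (Cminus zl z0) * snd q + snd (Cminus zl z0) * fst q = 0) in G2.
  change (fst (Cminus zl z0)) with (fst zl + - fst z0) in G1, G2.
  change (snd (Cminus zl z0)) with (snd zl + - snd z0) in G1, G2.
  change (fst z0 * fst q - snd z0 * snd q < 0) in HEl.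
  set (d1 := fst zl + - fst z0) in *. set (d2 := snd zl + - snd z0) in *.
  set (x0 := fst z0) in *. set (y0 := snd z0) in *.
  set (s := fst q) in *. set (t := snd q) in *.
  assert (Hx : fst zl = x0 + d1) by (unfold d1; lra).
  assert (Hy : snd zl = y0 + d2) by (unfold d2; lra).
  rewrite Hx, Hy.
  assert (Iden : (x0 * d1 + y0 * d2) * (s * s + t * t) =
     (l0 - l) * (x0 * s - y0 * t) + (x0 * t + y0 * s) * (d1 * t + d2 * s)
     + (x0 * s - y0 * t) * (d1 * s - d2 * t - (l0 - l))) by ring.
  rewrite G2, G1 in Iden.
  assert (Pos : 0 < (x0 * d1 + y0 * d2) * (s * s + t * t)).
  { rewrite Iden. nra. }
  assert (0 < x0 * d1 + y0 * d2).
  { destruct (Rle_or_lt (x0 * d1 + y0 * d2) 0) as [H|H]; auto.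
    assert (0 <= s * s + t * t) by nra. nra. }
  nra.
Qed.

Theorem lemma3 (tau : nat) (htau : (1 <= tau)%nat)
  (I : R -> Prop) (hI : is_interval I) (hIpos : forall x, I x -> 0 < x)
  (z : R -> Complex.C)
  (hz_nonreal : forall lam, I lam -> Im (z lam) <> 0)
  (hz_cont : continuous_on I z)
  (hz_root : forall lam, I lam -> h tau (z lam) lam = RtoC 0) :
  forall l1 l2, I l1 -> I l2 -> l1 < l2 -> Cmod (z l1) < Cmod (z l2).
Proof.
  intros l1 l2 H1 H2 Hlt.
  set (N := fun l => fst (z l) * fst (z l) + snd (z l) * snd (z l)).
  assert (HN : N l1 < N l2).
  { apply (global N I hI); auto.
    - intros l Hl. unfold N.
      pose proof (hz_cont l Hl) as Hc.
      assert (HX := filterlim_comp _ _ _ z (fun w => fst w) _ _ _ Hc (lim_fst (z l))).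
      assert (HY := filterlim_comp _ _ _ z (fun w => snd w) _ _ _ Hc (lim_snd (z l))).
      apply lim_plus; apply lim_mult; auto.
    - intros l0 H0. exact (local_incr tau htau I hIpos z hz_nonreal hz_cont hz_root l0 H0). }
  unfold Cmod. apply sqrt_lt_1_alt. split.
  - pose proof (pow2_ge_0 (fst (z l1))). pose proof (pow2_ge_0 (snd (z l1))). lra.
  - unfold N in HN. simpl. lra.
Qed.
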